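(* Let $A \in \mathbb{C}^{N \times N}$ have an orthonormal basis of eigenvectors $\psi_1,\ldots,\psi_N$ with eigenvalues $\lambda_1,\ldots,\lambda_N$ ordered so that $|\lambda_1| > |\lambda_2| \ge |\lambda_3| \ge \cdots \ge |\lambda_N|$. Let $v \in \mathbb{C}^N$ with $\|v\| = 1$, let $e \in \mathbb{C}^N$ be arbitrary, and let $\theta = \measuredangle(v,\psi_1)$. If $$\frac{\|e\|}{|\lambda_1|} < \left(1 - \left|\frac{\lambda_2}{\lambda_1}\right|\right)\frac{\cos(\theta)\sin(\theta)}{\cos(\theta)+\sin(\theta)},$$ then $\measuredangle(Av+e,\psi_1) < \measuredangle(v,\psi_1)$.
   Context: $\|\cdot\|$ is the Euclidean norm. For nonzero $x,y \in \mathbb{C}^N$, the angle $\measuredangle(x,y)\in[0,\pi/2]$ is defined by $\cos\measuredangle(x,y) = |\langle x, y\rangle|/(\|x\|\,\|y\|)$; equivalently, with $\mathcal{P} = \psi_1\psi_1^{*}$ and $\mathcal{P}_\perp = I - \mathcal{P}$, one has $\tan\measuredangle(x,\psi_1) = \|\mathcal{P}_\perp x\|/\|\mathcal{P} x\|$. The vector $e$ models an arbitrary perturbation (e.g. a truncation error) of the product $Av$ in one step of inexact power iteration. *)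

(* Defs.v *)
From HB Require Import structures.
From mathcomp Require Import all_boot all_order all_algebra.
From mathcomp Require Import complex.
From mathcomp Require Import reals trigo.
Set Implicit Arguments. Unset Strict Implicit. Unset Printing Implicit Defensive.
Import Order.TTheory GRing.Theory Num.Theory.
Local Open Scope ring_scope.

Definition cmod (R : realType) (z : R[i]) : R :=
  Num.sqrt (complex.Re z ^+ 2 + complex.Im z ^+ 2).

Definition cdot (R : realType) (N : nat) (x y : 'cV[R[i]]_N) : R[i] :=
  \sum_(k < N) x k 0 * conjc (y k 0).

Definition vnorm (R : realType) (N : nat) (x : 'cV[R[i]]_N) : R :=
  Num.sqrt (\sum_(k < N) cmod (x k 0) ^+ 2).

Definition vangle (R : realType) (N : nat) (x y : 'cV[R[i]]_N) : R :=
  acos (cmod (cdot x y) / (vnorm x * vnorm y)).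

(* Main.v *)
Require Import Defs.
From HB Require Import structures.
From mathcomp Require Import all_boot all_order all_algebra.
From mathcomp Require Import complex.
From mathcomp Require Import reals trigo.
From mathcomp Require Import ring lra.
Import Order.TTheory GRing.Theory Num.Theory.
Local Open Scope ring_scope.
Local Open Scope complex_scope.
Set Implicit Arguments. Unset Strict Implicit. Unset Printing Implicit Defensive.

Section C.
Variable R : realType.
Implicit Types z w : R[i].

Lemma cmodE z : `|z| = (cmod z)%:C.
Proof. exact: normc_def. Qed.

Lemma cmod_ge0 z : 0 <= cmod z.
Proof. exact: sqrtr_ge0. Qed.

Lemma cmodD z w : cmod (z + w) <= cmod z + cmod w.
Proof. by have := ler_normD z w; rewrite !cmodE -rmorphD lecR. Qed.

Lemma cmodN z : cmod (- z) = cmod z.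
Proof. by apply: (@complexI R); rewrite -!cmodE normrN. Qed.

Lemma cmodM z w : cmod (z * w) = cmod z * cmod w.
Proof. apply: (@complexI R); rewrite -cmodE normrM !cmodE; by rewrite rmorphM. Qed.

Lemma cmod_sqr z : ((cmod z)^+2)%:C = z * conjc z.
Proof.
case: z => a b; rewrite /cmod /= sqr_sqrtr ?addr_ge0 ?sqr_ge0 //.
apply/eqP; rewrite eq_complex /=; apply/andP; split; apply/eqP; ring.
Qed.
End C.

Section M.
Variable R : realType.
Variable n : nat.
Variable psi : 'I_n -> 'cV[R[i]]_n.
Hypothesis ortho : forall i j : 'I_n, cdot (psi i) (psi j) = (i == j)%:R.

Definition Umx : 'M[R[i]]_n := \matrix_(i, j) conjc (psi i j 0).
Definition Pmx : 'M[R[i]]_n := \matrix_(i, j) psi j i 0.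

Lemma UP : Umx *m Pmx = 1%:M.
Proof.
apply/matrixP => i j; rewrite !mxE -[RHS]/((i == j)%:R) eq_sym -ortho /cdot.
by apply: eq_bigr => k _; rewrite !mxE mulrC.
Qed.

Lemma PU : Pmx *m Umx = 1%:M.
Proof. exact: mulmx1C UP. Qed.

Lemma coordE (x : 'cV[R[i]]_n) i : (Umx *m x) i 0 = cdot x (psi i).
Proof. by rewrite mxE /cdot; apply: eq_bigr => k _; rewrite mxE mulrC. Qed.

Definition sqn (x : 'cV[R[i]]_n) : R[i] := ((map_mx conjc x)^T *m x) 0 0.

Lemma sqnE (x : 'cV[R[i]]_n) : sqn x = \sum_k ((cmod (x k 0))^+2)%:C.
Proof. by rewrite /sqn mxE; apply: eq_bigr => k _; rewrite cmod_sqr !mxE mulrC. Qed.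

Lemma UH : (map_mx conjc Umx)^T = Pmx.
Proof. by apply/matrixP => i j; rewrite !mxE conjcK. Qed.

Lemma sqnU (x : 'cV[R[i]]_n) : sqn (Umx *m x) = sqn x.
Proof.
by rewrite /sqn map_mxM trmx_mul UH mulmxA -(mulmxA _ Pmx) PU mulmx1.
Qed.

Variable A : 'M[R[i]]_n.
Variable lambda : 'I_n -> R[i].
Hypothesis eig : forall i, A *m psi i = lambda i *: psi i.

Lemma AP : A *m Pmx = Pmx *m diag_mx (\row_i lambda i).
Proof.
apply/matrixP => i j; rewrite mul_mx_diag !mxE.
have := congr1 (fun M : 'cV[R[i]]_n => M i 0) (eig j); rewrite !mxE => E; rewrite mulrC -E.
by apply: eq_bigr => k _; rewrite !mxE.
Qed.

Lemma coordA (x : 'cV[R[i]]_n) i : (Umx *m (A *m x)) i 0 = lambda i * (Umx *m x) i 0.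
Proof.
have -> : Umx *m (A *m x) = diag_mx (\row_i lambda i) *m (Umx *m x).
  have -> : A = Pmx *m diag_mx (\row_i lambda i) *m Umx.
    by rewrite -AP -mulmxA PU mulmx1.
  by rewrite !mulmxA UP mul1mx.
by rewrite mul_diag_mx !mxE.
Qed.
End M.

Section Real.
Variable R : realType.

Lemma dsum_lin m (F G H : 'I_m -> 'I_m -> R) :
  \sum_i \sum_j (F i j + G i j - 2%:R * H i j) =
  \sum_i \sum_j F i j + \sum_i \sum_j G i j - 2%:R * \sum_i \sum_j H i j.
Proof.
rewrite mulr_sumr -big_split -sumrB /=; apply: eq_bigr => i _.
by rewrite mulr_sumr -big_split -sumrB.
Qed.

Lemma cauchy_schwarz m (a b : 'I_m -> R) :
  (\sum_i a i * b i) ^+ 2 <= (\sum_i a i ^+ 2) * (\sum_i b i ^+ 2).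
Proof.
have H : 0 <= \sum_i \sum_j (a i * b j - a j * b i) ^+ 2.
  by apply: sumr_ge0 => i _; apply: sumr_ge0 => j _; exact: sqr_ge0.
have E : \sum_i \sum_j (a i * b j - a j * b i) ^+ 2 =
   \sum_i \sum_j (a i ^+ 2 * b j ^+ 2 + b i ^+ 2 * a j ^+ 2
                        - 2%:R * ((a i * b i) * (a j * b j))).
  by apply: eq_bigr => i _; apply: eq_bigr => j _; ring.
rewrite dsum_lin -!big_distrlr /= mulrC -expr2 in E.
rewrite E in H; lra.
Qed.

Lemma minkowski m (a b : 'I_m -> R) :
  (forall i, 0 <= a i) -> (forall i, 0 <= b i) ->
  Num.sqrt (\sum_i (a i + b i) ^+ 2) <=
  Num.sqrt (\sum_i a i ^+ 2) + Num.sqrt (\sum_i b i ^+ 2).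
Proof.
move=> a0 b0.
set A := \sum_i a i ^+ 2; set B := \sum_i b i ^+ 2; set C := \sum_i a i * b i.
have A0 : 0 <= A by apply: sumr_ge0 => i _; exact: sqr_ge0.
have B0 : 0 <= B by apply: sumr_ge0 => i _; exact: sqr_ge0.
have C0 : 0 <= C by apply: sumr_ge0 => i _; exact: mulr_ge0.
have E : \sum_i (a i + b i) ^+ 2 = A + B + 2%:R * C.
  rewrite /A /B /C mulr_sumr -!big_split /=; apply: eq_bigr => i _; ring.
have CS : C <= Num.sqrt A * Num.sqrt B.
  rewrite -sqrtrM // -(ger0_norm C0) -sqrtr_sqr ler_sqrt ?mulr_ge0 //.
  exact: cauchy_schwarz.
rewrite E -(ger0_norm (addr_ge0 (sqrtr_ge0 A) (sqrtr_ge0 B))) -sqrtr_sqr.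
rewrite ler_sqrt ?sqr_ge0 // sqrrD !sqr_sqrtr //; lra.
Qed.
End Real.

Section Real2.
Variable R : realType.

Lemma core (c s L l eps p q : R) :
  0 <= c -> 0 <= s -> c ^+ 2 + s ^+ 2 = 1 -> 0 < L -> 0 <= l -> 0 <= eps ->
  L * c - eps <= p -> 0 <= p -> 0 <= q -> q <= l * s + eps ->
  eps / L < (1 - l / L) * (c * s / (c + s)) ->
  c < p / Num.sqrt (p ^+ 2 + q ^+ 2).
Proof.
move=> c0 s0 cs1 L0 l0 e0 hp p0 q0 hq hyp.
have cs0 : 0 < c + s.
  rewrite lt_def addr_ge0 // andbT; apply/eqP => h.
  have cE : c = 0 by lra.
  have sE : s = 0 by lra.
  by move: cs1; rewrite cE sE expr0n /= addr0 => /eqP; rewrite eq_sym oner_eq0.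
have E1 : eps * (c + s) < (L - l) * c * s.
  have -> : (L - l) * c * s = ((1 - l / L) * (c * s / (c + s))) * (L * (c + s)).
    by field; rewrite ?gt_eqF.
  have -> : eps * (c + s) = (eps / L) * (L * (c + s)) by field; rewrite gt_eqF.
  by rewrite ltr_pM2r ?mulr_gt0.
have h1 : s * (L * c - eps) <= s * p by rewrite ler_wpM2l.
have h2 : c * q <= c * (l * s + eps) by rewrite ler_wpM2l.
have key : c * q < s * p by nra.
have sp0 : 0 < s * p by apply: le_lt_trans key; rewrite mulr_ge0.
have pp : 0 < p.
  by rewrite lt_def p0 andbT; apply/eqP => pE; move: sp0; rewrite pE mulr0 ltxx.
have D0 : 0 < p ^+ 2 + q ^+ 2 by rewrite ltr_pwDl ?sqr_ge0 ?exprn_gt0.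
rewrite ltr_pdivlMr ?sqrtr_gt0 //.
rewrite -(ger0_norm c0) -sqrtr_sqr -sqrtrM ?sqr_ge0 //.
rewrite -(ger0_norm p0) -[X in _ < X]sqrtr_sqr ltr_sqrt ?exprn_gt0 //.
have k2 : (c * q) ^+ 2 < (s * p) ^+ 2.
  by rewrite ltr_pXn2r // ?nnegrE ?mulr_ge0 // ltW.
move: k2; rewrite !exprMn.
have -> : s ^+ 2 = 1 - c ^+ 2 by lra.
move=> k2; rewrite ger0_norm //; lra.
Qed.

Lemma core_le1 (p q : R) : 0 <= p -> p / Num.sqrt (p ^+ 2 + q ^+ 2) <= 1.
Proof.
move=> p0; have [->|pp] := eqVneq p 0; first by rewrite mul0r ler01.
have D0 : 0 < p ^+ 2 + q ^+ 2 by rewrite ltr_pwDl ?sqr_ge0 ?exprn_gt0 // lt_def pp.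
rewrite ler_pdivrMr ?sqrtr_gt0 // mul1r.
have {1}-> : p = Num.sqrt (p ^+ 2) by rewrite sqrtr_sqr ger0_norm.
by rewrite ler_sqrt ?lerDl ?sqr_ge0 // ltW.
Qed.
End Real2.


Definition Ssum {R : realType} {n : nat} (x : 'cV[R[i]]_n) : R :=
  \sum_k cmod (x k 0) ^+ 2.

Lemma Ssum_ge0 (R : realType) n (x : 'cV[R[i]]_n) : 0 <= Ssum x.
Proof. by apply: sumr_ge0 => k _; exact: sqr_ge0. Qed.

Lemma vnormS (R : realType) n (x : 'cV[R[i]]_n) : vnorm x = Num.sqrt (Ssum x).
Proof. by []. Qed.

Lemma SsumC (R : realType) n (x : 'cV[R[i]]_n) : (Ssum x)%:C = sqn x.
Proof. by rewrite sqnE rmorph_sum. Qed.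

Lemma SsumU (R : realType) n psi (ortho : forall i j : 'I_n, cdot (psi i) (psi j) = (i == j)%:R)
   (x : 'cV[R[i]]_n) : Ssum (Umx psi *m x) = Ssum x.
Proof. by apply: (@complexI R); rewrite !SsumC sqnU. Qed.

Theorem theorem2 (R : realType) (N : nat) (A : 'M[R[i]]_N.+2)
    (psi : 'I_N.+2 -> 'cV[R[i]]_N.+2) (lambda : 'I_N.+2 -> R[i])
    (v e : 'cV[R[i]]_N.+2) :
  (forall i j : 'I_N.+2, cdot (psi i) (psi j) = (i == j)%:R) ->
  (forall i : 'I_N.+2, A *m psi i = lambda i *: psi i) ->
  cmod (lambda (inord 1)) < cmod (lambda ord0) ->
  (forall i j : 'I_N.+2, (1 <= i)%N -> (i <= j)%N ->
     cmod (lambda j) <= cmod (lambda i)) ->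
  vnorm v = 1 ->
  let theta := vangle v (psi ord0) in
  vnorm e / cmod (lambda ord0) <
    (1 - cmod (lambda (inord 1)) / cmod (lambda ord0)) *
    (cos theta * sin theta / (cos theta + sin theta)) ->
  vangle (A *m v + e) (psi ord0) < vangle v (psi ord0).
Proof.
move=> ortho eig hl hmono hv theta hyp; rewrite /theta in hyp.
set U := Umx psi.
set y := U *m v; set f := U *m e; set z := U *m (A *m v + e).
have zE : forall i, z i 0 = lambda i * y i 0 + f i 0.
  by move=> i; rewrite /z mulmxDr mxE (coordA ortho eig).
pose T (x : 'cV[R[i]]_N.+2) := \sum_(k < N.+1) cmod (x (lift ord0 k) 0) ^+ 2.
have T0 : forall x, 0 <= T x by move=> x; apply: sumr_ge0 => k _; exact: sqr_ge0.
have ST : forall x, Ssum x = cmod (x ord0 0) ^+ 2 + T x.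
  by move=> x; rewrite /Ssum big_ord_recl.
have Sv : Ssum v = 1.
  by rewrite -(sqr_sqrtr (Ssum_ge0 v)) -vnormS hv expr1n.
have Spsi : vnorm (psi ord0) = 1.
  rewrite vnormS (_ : Ssum _ = 1) ?sqrtr1 //; apply: (@complexI R).
  rewrite SsumC rmorph1 /sqn mxE -[RHS]/((ord0 == ord0 :> 'I_N.+2)%:R) -ortho /cdot.
  by apply: eq_bigr => k _; rewrite !mxE mulrC.
have Sy : Ssum y = 1 by rewrite /y SsumU.
set c := cmod (y ord0 0).
set s := Num.sqrt (T y).
have c0 : 0 <= c by exact: cmod_ge0.
have s0 : 0 <= s by exact: sqrtr_ge0.
have cs1 : c ^+ 2 + s ^+ 2 = 1 by rewrite /s sqr_sqrtr // -ST.
have cle1 : c <= 1.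
  have : c ^+ 2 <= 1 by rewrite -cs1 lerDl sqr_ge0.
  by rewrite -{1}(expr1n _ 2) ler_pXn2r // ?nnegrE.
have cI : c \in `[-1, 1].
  by rewrite in_itv /= cle1 andbT (le_trans _ c0) // lerN10.
have thE : vangle v (psi ord0) = acos c.
  by rewrite /vangle Spsi hv mulr1 divr1 -coordE.
rewrite thE acosK // sin_acos ?(itvP cI) // in hyp.
rewrite (_ : 1 - c ^+ 2 = T y) -/s in hyp; last by rewrite -cs1 addrC addKr sqr_sqrtr.
set L := cmod (lambda ord0); set l := cmod (lambda (inord 1)).
set eps := vnorm e.
have L0 : 0 < L by apply: le_lt_trans hl; exact: cmod_ge0.
have l0 : 0 <= l by exact: cmod_ge0.
have e0 : 0 <= eps by exact: sqrtr_ge0.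
have epsE : eps = Num.sqrt (Ssum f) by rewrite /f SsumU.
set p := cmod (z ord0 0).
set q := Num.sqrt (T z).
have p0 : 0 <= p by exact: cmod_ge0.
have q0 : 0 <= q by exact: sqrtr_ge0.
have f0le : cmod (f ord0 0) <= eps.
  rewrite epsE -(ger0_norm (cmod_ge0 (f ord0 0))) -sqrtr_sqr ler_sqrt ?Ssum_ge0 //.
  by rewrite ST lerDl.
have hp : L * c - eps <= p.
  have : L * c <= p + cmod (f ord0 0).
    have -> : L * c = cmod (z ord0 0 - f ord0 0) by rewrite zE addrK cmodM.
    apply: (le_trans (cmodD _ _)).
    by rewrite cmodN.
  lra.
have hz : forall k, cmod (z (lift ord0 k) 0) <=
    l * cmod (y (lift ord0 k) 0) + cmod (f (lift ord0 k) 0).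
  move=> k; rewrite zE; apply: (le_trans (cmodD _ _)).
  rewrite lerD2r cmodM ler_wpM2r ?cmod_ge0 //.
  by apply: hmono; rewrite inordK // lift0.
have hq : q <= l * s + eps.
  apply: (@le_trans _ _ (Num.sqrt (\sum_k (l * cmod (y (lift ord0 k) 0)
                          + cmod (f (lift ord0 k) 0)) ^+ 2))).
    rewrite ler_sqrt; last by apply: sumr_ge0 => k _; exact: sqr_ge0.
    apply: ler_sum => k _; rewrite ler_pXn2r ?nnegrE ?cmod_ge0 //.
    by rewrite addr_ge0 ?mulr_ge0 ?cmod_ge0.
  apply: (le_trans (@minkowski R N.+1 (fun k => l * cmod (y (lift ord0 k) 0))
                   (fun k => cmod (f (lift ord0 k) 0)) _ _)).
  - by move=> k; rewrite mulr_ge0 ?cmod_ge0.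
  - by move=> k; rewrite cmod_ge0.
  apply: lerD.
    under eq_bigr do rewrite exprMn.
    by rewrite -mulr_sumr sqrtrM ?sqr_ge0 // sqrtr_sqr ger0_norm.
  rewrite epsE ler_sqrt ?Ssum_ge0 // ST lerDr; exact: sqr_ge0.
have key := core c0 s0 cs1 L0 l0 e0 hp p0 q0 hq hyp.
have hw : vangle (A *m v + e) (psi ord0) = acos (p / Num.sqrt (p ^+ 2 + q ^+ 2)).
  rewrite /vangle Spsi mulr1 -(coordE psi) vnormS -(SsumU ortho) -/U -/z.
  by rewrite ST /q sqr_sqrtr.
set r := p / Num.sqrt (p ^+ 2 + q ^+ 2) in key hw.
have rI : r \in `[-1, 1].
  rewrite in_itv /= core_le1 // andbT (le_trans _ (divr_ge0 p0 (sqrtr_ge0 _))) //.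
  by rewrite lerN10.
rewrite hw thE.
have memI : forall x : R, x \in `[-1, 1] -> acos x \in `[0, pi].
  by move=> x; rewrite !in_itv /= => xI; rewrite acos_ge0 ?acos_lepi.
by rewrite -(ltr_cos (memI _ rI) (memI _ cI)) !acosK.
Qed.
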